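(* Let $1/n\ll\nu\ll\tau\ll\alpha\ll 1$, and let $G$ be a digraph on $n$ vertices such that $e(G)\geq(\alpha-\nu)n^2$ and $\Delta^0(G)\leq\alpha n$. If $G$ is not a robust $(\nu,\tau)$-outexpander, then $G$ admits a $(4,\tau,4\nu)$-partition.
   Context: Hierarchy convention: $x\ll y$ means $x\leq f(y)$ for some implicitly given non-decreasing function $f:(0,1]\to(0,1]$; the statement asserts such functions exist, constants chosen from right to left. $\Delta^0(G)$ is the maximum over all vertices of the maximum of in- and outdegree. For $S\subseteq V(G)$, the robust $\nu$-outneighbourhood is $RN^+_\nu(S)=\{v\in V(G):|N^-(v)\cap S|\geq\nu n\}$; $G$ is a robust $(\nu,\tau)$-outexpander if $|RN^+_\nu(S)|\geq|S|+\nu n$ for all $S\subseteq V(G)$ with $\tau n\leq|S|\leq(1-\tau)n$. A $4$-partition is a family $\{V_{ij}:i,j\in[2]\}$ of pairwise disjoint (possibly empty) sets with union $V(G)$; $V_{i*}=V_{i1}\cup V_{i2}$, $V_{*j}=V_{1j}\cup V_{2j}$. With $E(A,B)$ the set of edges $ab$, $a\in A$, $b\in B$, the bad edges are $E(V_{1*},V_{*2})\cup E(V_{2*},V_{*1})$. A $(4,\tau,\gamma)$-partition is a $4$-partition with at most $\gamma n^2$ bad edges and $|V_{i*}|,|V_{*j}|\geq\tau n$ for all $i,j\in[2]$. *)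

(* Defs.v *)
From HB Require Import structures.
From mathcomp Require Import all_boot all_order all_algebra.
From mathcomp Require Export reals.
Set Implicit Arguments. Unset Strict Implicit. Unset Printing Implicit Defensive.
Import Order.TTheory GRing.Theory Num.Theory.
Local Open Scope ring_scope.

Section Digraphs.
Variables (R : realType) (T : finType).
Implicit Types (e : rel T) (S : {set T}).

Definition loopless e := forall v, ~~ e v v.

Definition outdeg e v := #|[set w | e v w]|.
Definition indeg e v := #|[set w | e w v]|.

Definition nedges e := #|[set p : T * T | e p.1 p.2]|.

Definition maxsemideg_le e (d : R) :=
  forall v, (outdeg e v)%:R <= d /\ (indeg e v)%:R <= d.

Definition robust_outnbhd e (nu : R) S : {set T} :=
  [set v | nu * #|T|%:R <= #|[set u in S | e u v]|%:R].

Definition robust_outexpander e (nu tau : R) :=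
  forall S, tau * #|T|%:R <= #|S|%:R -> #|S|%:R <= (1 - tau) * #|T|%:R ->
    #|S|%:R + nu * #|T|%:R <= #|robust_outnbhd e nu S|%:R.

(* 4-partitions: V i j for i j : 'I_2 (index 0 stands for 1, index 1 for 2) *)
Definition four_partition (V : 'I_2 -> 'I_2 -> {set T}) :=
  (forall i j i' j', (i, j) != (i', j') -> [disjoint V i j & V i' j']) /\
  \bigcup_(i < 2) \bigcup_(j < 2) V i j = [set: T].

Definition Vrow (V : 'I_2 -> 'I_2 -> {set T}) (i : 'I_2) := V i 0 :|: V i 1.
Definition Vcol (V : 'I_2 -> 'I_2 -> {set T}) (j : 'I_2) := V 0 j :|: V 1 j.

Definition bad_edges e (V : 'I_2 -> 'I_2 -> {set T}) : {set T * T} :=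
  [set p : T * T | e p.1 p.2 &&
     ((p.1 \in Vrow V 0) && (p.2 \in Vcol V 1) ||
      (p.1 \in Vrow V 1) && (p.2 \in Vcol V 0))].

Definition four_tau_gamma_partition e (tau gamma : R) V :=
  [/\ four_partition V,
      #|bad_edges e V|%:R <= gamma * (#|T|%:R ^+ 2) &
      forall i : 'I_2, tau * #|T|%:R <= #|Vrow V i|%:R /\
                       tau * #|T|%:R <= #|Vcol V i|%:R].
End Digraphs.

Definition hier_fun (R : realType) (f : R -> R) :=
  (forall x, 0 < x <= 1 -> 0 < f x <= 1) /\
  (forall x y, 0 < x <= 1 -> 0 < y <= 1 -> x <= y -> f x <= f y).

(* Main.v *)
Require Import Defs.
From mathcomp Require Import all_boot all_order all_algebra reals.
From mathcomp Require Import lra.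
Import Order.TTheory GRing.Theory Num.Theory.
Local Open Scope ring_scope.
Set Implicit Arguments. Unset Strict Implicit.


Section Aux.
Variable T : finType.

Definition EE (e : rel T) (A B : {set T}) : nat :=
  (\sum_u \sum_v (((u \in A) && (v \in B) && e u v) : nat))%N.

Lemma card_sumb (U : finType) (P : pred U) : #|[set x | P x]| = (\sum_x (P x : nat))%N.
Proof.
rewrite -sum1_card big_mkcond; apply: eq_bigr => x _; rewrite inE; by case: (P x).
Qed.

Lemma card_sumA (A : {set T}) : #|A| = (\sum_x ((x \in A) : nat))%N.
Proof.
rewrite -sum1_card big_mkcond; apply: eq_bigr => x _; by case: (x \in A).
Qed.

Lemma EE_splitL e (A B C : {set T}) : EE e A B = (EE e (A :&: C) B + EE e (A :\: C) B)%N.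
Proof.
rewrite /EE -big_split; apply: eq_bigr => u _; rewrite -big_split; apply: eq_bigr => v _ /=.
rewrite !inE; by case: (u \in A); case: (u \in C); case: (v \in B); case: (e u v).
Qed.

Lemma EE_splitR e (A B C : {set T}) : EE e A B = (EE e A (B :&: C) + EE e A (B :\: C))%N.
Proof.
rewrite /EE -big_split; apply: eq_bigr => u _; rewrite -big_split; apply: eq_bigr => v _ /=.
rewrite !inE; by case: (u \in A); case: (v \in C); case: (v \in B); case: (e u v).
Qed.

Lemma EE_mono e (A B A' B' : {set T}) : A \subset A' -> B \subset B' -> (EE e A B <= EE e A' B')%N.
Proof.
move=> /subsetP HA /subsetP HB; rewrite /EE; apply: leq_sum => u _; apply: leq_sum => v _.
case: (boolP (u \in A)) => hu //=; case: (boolP (v \in B)) => hv //=.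
by rewrite HA // HB.
Qed.

Lemma EE_tr e (A B : {set T}) : EE e A B = EE (fun x y => e y x) B A.
Proof.
rewrite /EE exchange_big; apply: eq_bigr => u _; apply: eq_bigr => v _ /=.
by case: (u \in B); case: (v \in A).
Qed.

Lemma EE_bound (R : realType) e (A B : {set T}) (d : R) :
  (forall u, u \in A -> ((\sum_v (((v \in B) && e u v) : nat))%N)%:R <= d) ->
  (EE e A B)%:R <= d * #|A|%:R.
Proof.
move=> H; rewrite /EE natr_sum.
apply: (@le_trans _ _ (\sum_u ((u \in A) : nat)%:R * d)).
  apply: ler_sum => u _; case: (boolP (u \in A)) => hu /=.
    by rewrite mul1r; apply: H.
  by rewrite mul0r big1.
by rewrite -mulr_suml -natr_sum -card_sumA mulrC.
Qed.

Lemma EE_out (R : realType) e (A : {set T}) (d : R) :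
  (forall u, (outdeg e u)%:R <= d) -> (EE e A setT)%:R <= d * #|A|%:R.
Proof.
move=> H; apply: EE_bound => u _; apply: le_trans (H u).
rewrite /outdeg card_sumb ler_nat; apply: eq_leq; apply: eq_bigr => v _; by rewrite in_setT.
Qed.

Lemma EE_in (R : realType) e (B : {set T}) (d : R) :
  (forall u, (indeg e u)%:R <= d) -> (EE e setT B)%:R <= d * #|B|%:R.
Proof.
move=> H; rewrite EE_tr; exact: EE_out.
Qed.

Lemma nedgesE e : nedges e = EE e setT setT.
Proof.
rewrite /nedges card_sumb /EE pair_bigA /=; apply: eq_bigr => p _.
by rewrite !inE.
Qed.

Lemma between (A B : {set T}) k : A \subset B -> (#|A| <= k <= #|B|)%N ->
  exists C : {set T}, [/\ A \subset C, C \subset B & #|C| = k].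
Proof.
move=> AB; elim: k => [|k IH].
  rewrite leqn0 => /andP[/eqP A0 _]; exists A; split => //.
move=> /andP[]; rewrite leq_eqVlt => /orP[/eqP <- _|].
  by exists A; split.
move=> Ak kB; have Ak' : (#|A| <= k)%N by [].
have [C [AC CB Ck]] : exists C : {set T}, [/\ A \subset C, C \subset B & #|C| = k].
  by apply: IH; rewrite Ak' ltnW.
have : exists x, (x \in B) && (x \notin C).
  apply/existsP; apply: contraLR kB; rewrite negb_exists => /forallP H.
  rewrite -leqNgt -Ck; apply: subset_leq_card; apply/subsetP => x xB.
  by have := H x; rewrite xB /= negbK.
case=> x /andP[xB xC]; exists (x |: C); split.
- by apply: subset_trans AC (subsetUr _ _).
- by rewrite subUset sub1set xB.
- by rewrite cardsU1 xC Ck.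
Qed.
End Aux.

Lemma ord2 (i : 'I_2) : i = 0 \/ i = 1.
Proof. case: i => [[|[|m]] Hm]; [left|right|]; try (by apply: ord_inj); by []. Qed.

Section Part.
Variable T : finType.
Variables (S X : {set T}).
Definition Vof (i j : 'I_2) : {set T} :=
  [set v | ((v \in S) == (i == 0)) && ((v \in X) == (j == 0))].

Lemma Vof_part : four_partition Vof.
Proof.
split.
  move=> i j i' j'; have [->|->] := ord2 i; have [->|->] := ord2 j;
  have [->|->] := ord2 i'; have [->|->] := ord2 j'; rewrite ?eqxx // => _;
  rewrite -setI_eq0; apply/eqP/setP => v; rewrite !inE;
  by case: (v \in S); case: (v \in X).
apply/setP => v; rewrite inE; apply/bigcupP.
exists (if v \in S then 0 else 1) => //; apply/bigcupP.
exists (if v \in X then 0 else 1) => //; rewrite inE.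
by case: (v \in S); case: (v \in X).
Qed.

Lemma Vrow0 : Vrow Vof 0 = S.
Proof. apply/setP => v; rewrite !inE; by case: (v \in S); case: (v \in X). Qed.
Lemma Vrow1 : Vrow Vof 1 = ~: S.
Proof. apply/setP => v; rewrite !inE; by case: (v \in S); case: (v \in X). Qed.
Lemma Vcol0 : Vcol Vof 0 = X.
Proof. apply/setP => v; rewrite !inE; by case: (v \in S); case: (v \in X). Qed.
Lemma Vcol1 : Vcol Vof 1 = ~: X.
Proof. apply/setP => v; rewrite !inE; by case: (v \in S); case: (v \in X). Qed.

Lemma bad_Vof e : #|bad_edges e Vof| = (EE e S (~: X) + EE e (~: S) X)%N.
Proof.
rewrite /bad_edges Vrow0 Vrow1 Vcol0 Vcol1 card_sumb /EE -big_split /=.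
under [RHS]eq_bigr => u _ do rewrite -big_split.
rewrite pair_bigA /=; apply: eq_bigr => p _; rewrite !inE.
by case: (p.1 \in S); case: (p.2 \in X); case: (e p.1 p.2).
Qed.
End Part.

Lemma key (R : realType) (T : finType) (e : rel T) (S X : {set T}) (a nu : R) :
  0 <= a -> 0 <= nu ->
  maxsemideg_le e (a * #|T|%:R) -> (a - nu) * (#|T|%:R ^+ 2) <= (nedges e)%:R ->
  (#|bad_edges e (Vof S X)|)%:R <= a * #|T|%:R * (#|X|%:R - #|S|%:R)
      + 3 * nu * (#|T|%:R ^+ 2) + 2 * (a * #|T|%:R) * #|robust_outnbhd e nu S :\: X|%:R.
Proof.
move=> a0 nu0 Hdeg Hm.
set n := #|T|%:R. set RN := robust_outnbhd e nu S.
have n0 : 0 <= n by [].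
have Hout : forall u, (outdeg e u)%:R <= a * n by move=> u; case: (Hdeg u).
have Hin : forall u, (indeg e u)%:R <= a * n by move=> u; case: (Hdeg u).
have Hbad := bad_Vof S X e.
have E1 := EE_splitR e S setT X; rewrite setTI setTD in E1.
have E2 := EE_splitL e setT X S; rewrite setTI setTD in E2.
have E3 := EE_in X Hin.
have E4 := EE_splitR e S RN X.
have E5 : (EE e S (RN :&: X) <= EE e S X)%N by apply: EE_mono; rewrite ?subsetIr.
have E6 : (EE e S (RN :\: X) <= EE e setT (RN :\: X))%N by apply: EE_mono; rewrite ?subsetT.
have E7 := EE_in (RN :\: X) Hin.
have E8 := EE_splitR e S setT RN; rewrite setTI setTD in E8.
have E9 : (EE e S (~: RN))%:R <= nu * n * #|~: RN|%:R.
  rewrite EE_tr; apply: EE_bound => u; rewrite inE => uRN.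
  move: uRN; rewrite /RN /robust_outnbhd inE -ltNge => /ltW; apply: le_trans.
  rewrite card_sumb ler_nat; apply: eq_leq; apply: eq_bigr => v _; by [].
have E10 := nedgesE e.
have E11 := EE_splitL e setT setT S; rewrite setTI setTD in E11.
have E12 := EE_out (~: S) Hout.
have C1 := cardsC S. have C2 := cardsC RN.
have C1' : #|~: S|%:R = n - #|S|%:R by rewrite /n -C1 natrD; lra.
have C2' : #|~: RN|%:R = n - #|RN|%:R by rewrite /n -C2 natrD; lra.
rewrite C1' in E12; rewrite C2' in E9.
have P1 : 0 <= nu * n * #|RN|%:R by rewrite mulr_ge0 // mulr_ge0.
move/eqP: Hbad; rewrite -(eqr_nat R) natrD => /eqP Hbad.
move/eqP: E1; rewrite -(eqr_nat R) natrD => /eqP E1.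
move/eqP: E2; rewrite -(eqr_nat R) natrD => /eqP E2.
move/eqP: E4; rewrite -(eqr_nat R) natrD => /eqP E4.
move/eqP: E8; rewrite -(eqr_nat R) natrD => /eqP E8.
move/eqP: E11; rewrite -(eqr_nat R) natrD => /eqP E11.
rewrite -(ler_nat R) in E5. rewrite -(ler_nat R) in E6.
rewrite E10 in Hm.
rewrite Hbad.
have -> : n ^+ 2 = n * n by rewrite expr2.
rewrite expr2 in Hm.
lra.
Qed.

Lemma finish (R : realType) (T : finType) (e : rel T) (S X : {set T}) (tau g : R) :
  tau * #|T|%:R <= #|S|%:R -> #|S|%:R <= (1 - tau) * #|T|%:R ->
  tau * #|T|%:R <= #|X|%:R -> #|X|%:R <= (1 - tau) * #|T|%:R ->
  (#|bad_edges e (Vof S X)|)%:R <= g * (#|T|%:R ^+ 2) ->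
  exists V, four_tau_gamma_partition e tau g V.
Proof.
move=> h1 h2 h3 h4 hb; exists (Vof S X); split => //.
  exact: Vof_part.
have C1 := cardsC S; have C2 := cardsC X.
have C1' : #|~: S|%:R = #|T|%:R - #|S|%:R :> R by rewrite -C1 natrD; lra.
have C2' : #|~: X|%:R = #|T|%:R - #|X|%:R :> R by rewrite -C2 natrD; lra.
move=> i; have [->|->] := ord2 i.
  by rewrite Vrow0 Vcol0.
rewrite Vrow1 Vcol1 C1' C2'; split; lra.
Qed.

Lemma floor_ex (R : realType) (c : R) : 0 <= c -> exists k : nat, k%:R <= c < k.+1%:R.
Proof. move=> c0; exists (Num.Def.trunc c); exact: truncn_itv. Qed.

Lemma main (R : realType) (alpha tau nu : R) (T : finType) (e : rel T) :
      0 < alpha <= 1 -> alpha <= 1/4 ->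
      0 < tau <= 1 -> tau <= 1/4 ->
      0 < nu <= 1 ->
      (0 < #|T|)%N -> (#|T|%:R)^-1 <= nu / 4 ->
      (alpha - nu) * (#|T|%:R ^+ 2) <= (nedges e)%:R ->
      maxsemideg_le e (alpha * #|T|%:R) ->
      ~ robust_outexpander e nu tau ->
      exists V : 'I_2 -> 'I_2 -> {set T},
        four_tau_gamma_partition e tau (4 * nu) V.
Proof.
move=> /andP[a0 a1] a4 /andP[t0 t1] t4 /andP[nu0 nu1] nT hn Hm Hdeg Hne.
set n : R := #|T|%:R.
have n0 : 0 < n by rewrite ltr0n.
have nun : 4 <= nu * n.
  have := ler_wpM2r (ltW n0) hn; rewrite mulVf ?gt_eqF //.
  move=> h; have : 4 * 1 <= 4 * (nu / 4 * n) by rewrite ler_wpM2l.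
  rewrite mulr1; lra.
have [S [HS1 HS2 HS3]] : exists S : {set T}, [/\ tau * n <= #|S|%:R,
    #|S|%:R <= (1 - tau) * n &
    #|robust_outnbhd e nu S|%:R < #|S|%:R + nu * n].
  case: (boolP [exists S : {set T}, (tau * n <= #|S|%:R) && (#|S|%:R <= (1 - tau) * n)
       && (#|robust_outnbhd e nu S|%:R < #|S|%:R + nu * n)]).
    by move/existsP => [S /andP[/andP[h1 h2] h3]]; exists S.
  rewrite negb_exists => /forallP H; exfalso; apply: Hne => S h1 h2.
  by have := H S; rewrite h1 h2 /= -leNgt.
set RN := robust_outnbhd e nu S.
have K X := key S X (ltW a0) (ltW nu0) Hdeg Hm.
rewrite -/n -/RN in K.
have P1 : alpha * n <= 1/4 * n by rewrite ler_wpM2r // ltW.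
have P2 : 4 * n <= nu * n * n by rewrite ler_wpM2r // ltW.
have an0 : 0 <= alpha * n by rewrite mulr_ge0 // ltW.
have P3 : alpha * n * (nu * n) <= 1/4 * n * (nu * n).
  by rewrite ler_wpM2r // ?mulr_ge0 // ltW.
have sq : n ^+ 2 = n * n by rewrite expr2.
have P4 : tau * n <= 1/4 * n by rewrite ler_wpM2r // ltW.
have P5 : nu * n <= 1 * n by rewrite ler_wpM2r // ltW.
case: (ltP #|RN|%:R (tau * n)) => Hr1.
  have [k /andP[k1 k2]] := floor_ex (mulr_ge0 (ltW t0) (ltW n0)).
  have kS : k.+1%:R = k%:R + 1 :> R by rewrite -addn1 natrD.
  have [X [RX _ Xk]] : exists X : {set T}, [/\ RN \subset X, X \subset setT & #|X| = k.+1].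
    apply: between; first exact: subsetT.
    rewrite cardsT; apply/andP; split.
      rewrite -(ler_nat R); lra.
    rewrite -(ler_nat R) -/n; lra.
  have D0 : #|RN :\: X| = 0%N by apply/eqP; rewrite cards_eq0 setD_eq0.
  have := K X; rewrite D0 Xk => KX.
  apply: (finish (X:=X) HS1 HS2); rewrite ?Xk; try lra.
  have Q : alpha * n * (k.+1%:R - #|S|%:R) <= alpha * n * 1 by rewrite ler_wpM2l //; lra.
  rewrite sq in KX *; lra.
case: (ltP ((1 - tau) * n) #|RN|%:R) => Hr2.
  have [k /andP[k1 k2]] : exists k : nat, k%:R <= (1 - tau) * n < k.+1%:R.
    apply: floor_ex; rewrite mulr_ge0 //; lra.
  have kS : k.+1%:R = k%:R + 1 :> R by rewrite -addn1 natrD.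
  have [X [_ XR Xk]] : exists X : {set T}, [/\ set0 \subset X, X \subset RN & #|X| = k].
    apply: between; first exact: sub0set.
    rewrite cards0 /=; rewrite -(ler_nat R) -/RN; lra.
  have D : #|RN :\: X|%:R = #|RN|%:R - k%:R :> R.
    have := cardsID X RN; rewrite (setIidPr XR) Xk => <-; rewrite natrD; lra.
  have := K X; rewrite D Xk => KX.
  apply: (finish (X:=X) HS1 HS2); rewrite ?Xk; try lra.
  have Q : alpha * n * (2 * #|RN|%:R - k%:R - #|S|%:R) <= alpha * n * (2 * (nu * n) + 1).
    by rewrite ler_wpM2l //; lra.
  rewrite sq in KX *; lra.
have := K RN; rewrite setDv cards0 => KX.
apply: (finish (X:=RN) HS1 HS2); try lra.
have Q : alpha * n * (#|RN|%:R - #|S|%:R) <= alpha * n * (nu * n).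
  by rewrite ler_wpM2l //; lra.
rewrite sq in KX *; lra.
Qed.

Theorem lemma3p6 (R : realType) :
  exists f1 f2 f3 f4 : R -> R,
    [/\ hier_fun f1, hier_fun f2, hier_fun f3 & hier_fun f4] /\
    forall (alpha tau nu : R) (T : finType) (e : rel T),
      0 < alpha <= 1 -> alpha <= f1 1 ->
      0 < tau <= 1 -> tau <= f2 alpha ->
      0 < nu <= 1 -> nu <= f3 tau ->
      (0 < #|T|)%N -> (#|T|%:R)^-1 <= f4 nu ->
      loopless e ->
      (alpha - nu) * (#|T|%:R ^+ 2) <= (nedges e)%:R ->
      maxsemideg_le e (alpha * #|T|%:R) ->
      ~ robust_outexpander e nu tau ->
      exists V : 'I_2 -> 'I_2 -> {set T},
        four_tau_gamma_partition e tau (4 * nu) V.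
Proof.
exists (fun _ => 1/4), (fun _ => 1/4), (fun x => x), (fun x => x / 4).
split.
  split; split; move=> *; try lra.
move=> alpha tau nu T e ha hf1 ht hf2 hnu _ nT hf4 _ Hm Hdeg Hne.
exact: (main ha hf1 ht hf2 hnu nT hf4 Hm Hdeg Hne).
Qed.
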